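(* Let $\mathbb F$ be an algebraically closed field of characteristic not two. (a) The problem of classifying (up to isomorphism) finite-dimensional associative algebras $R$ (without identity) over $\mathbb F$ with $R^3=0$ and $\dim R^2=2$ is wild. (b) The problem of classifying (up to isomorphism) local finite-dimensional algebras $\Lambda$ over $\mathbb F$ with $(\operatorname{Rad}\Lambda)^3=0$ and $\dim(\operatorname{Rad}\Lambda)^2=2$ is wild.
   Context: An algebra without identity is a finite-dimensional vector space $R$ over $\mathbb F$ with a bilinear associative multiplication; $R^2$ (resp. $R^3$) is the subspace spanned by all products $uv$ (resp. $uvw$). An algebra $\Lambda$ with identity is local if the set of its noninvertible elements is closed under addition; this set is then the radical $\operatorname{Rad}\Lambda$. A classification problem is called wild if it contains the problem of classifying pairs of $n$-by-$n$ matrices up to simultaneous similarity $(A,B)\mapsto(S^{-1}AS,S^{-1}BS)$, i.e. there is an assignment of an object of the problem to each matrix pair such that two matrix pairs are similar iff the assigned objects are isomorphic. *)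

(* Defs.v *)
From HB Require Import structures.
From mathcomp Require Import all_boot all_order all_algebra.

Import GRing.Theory.
Local Open Scope ring_scope.

Section Algebras.
Variable F : fieldType.

(* A finite-dimensional F-algebra structure on F^d (row vectors), given by
   structure constants: e_i * e_j = acoef i j.  Bilinearity is built in;
   associativity is imposed separately. *)
Record alg := Alg { adim : nat; acoef : 'I_adim -> 'I_adim -> 'rV[F]_adim }.

Definition amul (R : alg) (x y : 'rV[F]_(adim R)) : 'rV[F]_(adim R) :=
  \sum_(i < adim R) \sum_(j < adim R) (x 0 i * y 0 j) *: acoef R i j.

Definition alg_assoc (R : alg) : Prop :=
  forall x y z, amul R (amul R x y) z = amul R x (amul R y z).

Definition inspan {d} (P : 'rV[F]_d -> Prop) (v : 'rV[F]_d) : Prop :=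
  exists k (M : 'M[F]_(k, d)), (forall i, P (row i M)) /\ (v <= M)%MS.

Definition span_dim {d} (P : 'rV[F]_d -> Prop) (k : nat) : Prop :=
  exists M : 'M[F]_(k, d), row_free M /\ (forall i, inspan P (row i M)) /\
    (forall v, inspan P v -> (v <= M)%MS).

Definition alg_iso (R S : alg) : Prop :=
  exists M : 'M[F]_(adim R, adim S), row_free M /\ row_full M /\
    forall x y, amul R x y *m M = amul S (x *m M) (y *m M).

Definition class_a (R : alg) : Prop :=
  alg_assoc R /\
  (forall u v w, amul R (amul R u v) w = 0) /\
  span_dim (fun w => exists u v, w = amul R u v) 2.

Record ualg := UAlg { ualg_alg :> alg; uone : 'rV[F]_(adim ualg_alg) }.

Definition is_identity (L : ualg) : Prop :=
  forall x, amul L (uone L) x = x /\ amul L x (uone L) = x.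

Definition invertible (L : ualg) (x : 'rV[F]_(adim L)) : Prop :=
  exists y, amul L x y = uone L /\ amul L y x = uone L.

(* Rad: the set of noninvertible elements *)
Definition rad (L : ualg) (x : 'rV[F]_(adim L)) : Prop := ~ invertible L x.

Definition is_local (L : ualg) : Prop :=
  forall x y, rad L x -> rad L y -> rad L (x + y).

Definition class_b (L : ualg) : Prop :=
  alg_assoc L /\ is_identity L /\ is_local L /\
  (forall u v w, rad L u -> rad L v -> rad L w -> amul L (amul L u v) w = 0) /\
  span_dim (fun w => exists u v, rad L u /\ rad L v /\ w = amul L u v) 2.

Definition ualg_iso (L L' : ualg) : Prop :=
  exists M : 'M[F]_(adim L, adim L'), row_free M /\ row_full M /\
    uone L *m M = uone L' /\
    forall x y, amul L x y *m M = amul L' (x *m M) (y *m M).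

Definition similar_pairs {n} (A B A' B' : 'M[F]_n) : Prop :=
  exists S : 'M[F]_n, S \in unitmx /\
    A' = invmx S *m A *m S /\ B' = invmx S *m B *m S.

Definition wild {T : Type} (P : T -> Prop) (iso : T -> T -> Prop) : Prop :=
  exists f : forall n, 'M[F]_n.+1 -> 'M[F]_n.+1 -> T,
    (forall n A B, P (f n A B)) /\
    (forall n (A B A' B' : 'M[F]_n.+1),
        similar_pairs A B A' B' <-> iso (f n A B) (f n A' B')) /\
    (forall n m (A B : 'M[F]_n.+1) (A' B' : 'M[F]_m.+1),
        n <> m -> ~ iso (f n A B) (f m A' B')).

End Algebras.

(* Main.v *)
Require Import Defs.
From mathcomp Require Import all_boot all_order all_algebra zify ring.
Import GRing.Theory.
Local Open Scope ring_scope.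
Set Implicit Arguments. Unset Strict Implicit.

Section Gen.
Variable F : fieldType.

Lemma lin_expand d e (g : 'rV[F]_d -> 'rV[F]_e) :
  (forall a u w, g (a *: u + w) = a *: g u + g w) ->
  forall x, g x = \sum_i x 0 i *: g (delta_mx 0 i).
Proof.
move=> H.
have g0 : g 0 = 0.
  by have := H (-1) 0 0; rewrite scaler0 addr0 scaleN1r addNr.
have gD : {morph g : u w / u + w}.
  by move=> u w; have := H 1 u w; rewrite !scale1r.
have gZ : forall a u, g (a *: u) = a *: g u.
  by move=> a u; have := H a u 0; rewrite addr0 g0 addr0.
move=> x; rewrite {1}(row_sum_delta x) (big_morph g gD g0).
by apply: eq_bigr => i _; rewrite gZ.
Qed.

Definition mkalg d (f : 'rV[F]_d -> 'rV[F]_d -> 'rV[F]_d) : alg F :=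
  @Alg F d (fun i j => f (delta_mx 0 i) (delta_mx 0 j)).

Lemma amul_mkalg d (f : 'rV[F]_d -> 'rV[F]_d -> 'rV[F]_d) :
  (forall a u w y, f (a *: u + w) y = a *: f u y + f w y) ->
  (forall a u w x, f x (a *: u + w) = a *: f x u + f x w) ->
  forall x y, amul F (mkalg f) x y = f x y.
Proof.
move=> Hl Hr x y; rewrite /amul /=.
rewrite [RHS](@lin_expand d d (fun x => f x y) (fun a u w => Hl a u w y) x).
apply: eq_bigr => i _.
rewrite [f _ y](@lin_expand d d (f (delta_mx 0 i)) (fun a u w => Hr a u w _) y) scaler_sumr.
by apply: eq_bigr => j _; rewrite scalerA.
Qed.


Lemma span_dim_basis d k (P : 'rV[F]_d -> Prop) (M : 'M[F]_(k, d)) :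
  row_free M -> (forall i, P (row i M)) -> (forall v, P v -> (v <= M)%MS) ->
  span_dim F P k.
Proof.
move=> fM PM HM; exists M; split=> //; split.
  move=> i; exists 1%N, (row i M); split; last exact: submx_refl.
  move=> j; have -> : row j (row i M) = row i M by apply/rowP=> t; rewrite !mxE.
  exact: PM.
move=> v [k' [M' [HP Hv]]]; apply: submx_trans Hv _.
by apply/row_subP => j; exact: HM (HP j).
Qed.


Lemma span_dim_row0 d e k (P : 'rV[F]_d -> Prop) (P' : 'rV[F]_(e + d) -> Prop) :
  span_dim F P k -> (forall w, P' w <-> exists p, P p /\ w = row_mx 0 p) ->
  span_dim F P' k.
Proof.
move=> [M [fM [HMi HMs]]] HP'.
exists (row_mx 0 M : 'M_(k, e + d)); split; first by rewrite /row_free rank_row_0mx.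
split.
- move=> i; have [k' [M' [HPM' Hs]]] := HMi i.
  exists k', (row_mx 0 M'); split.
  + move=> j; apply/HP'; exists (row j M'); split; first exact: HPM'.
    by rewrite row_row_mx row0.
  + rewrite row_row_mx row0; move/submxP: Hs => [D ->]; apply/submxP; exists D.
    by rewrite mul_mx_row mulmx0.
- move=> v [k' [M'' [HPM'' Hs]]].
  have Hr : forall j, row j (rsubmx M'') = rsubmx (row j M'').
    by move=> j; apply/rowP => t; rewrite !mxE.
  have Hl : forall j, row j (lsubmx M'') = lsubmx (row j M'').
    by move=> j; apply/rowP => t; rewrite !mxE.
  have HP2 : forall j, P (row j (rsubmx M'')) /\ lsubmx (row j M'') = 0.
    move=> j; have [p [Pp ep]] := (HP' _).1 (HPM'' j).
    by rewrite Hr ep row_mxKr row_mxKl.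
  have L0 : lsubmx M'' = 0.
    by apply/row_matrixP => j; rewrite row0 Hl (HP2 j).2.
  move/submxP: Hs => [D ev].
  have inR : inspan F P (rsubmx v).
    exists k', (rsubmx M''); split; first by move=> j; exact: (HP2 j).1.
    by apply/submxP; exists D; rewrite mulmx_rsub ev.
  have /submxP [E eE] := HMs _ inR.
  apply/submxP; exists E; rewrite mul_mx_row mulmx0 -eE -{1}(hsubmxK v).
  by rewrite ev -mulmx_lsub L0 mulmx0.
Qed.

Definition wp v (Bf : 'I_2 -> 'M[F]_v) (u w : 'rV[F]_v) : 'rV[F]_2 :=
  \row_l (u *m Bf l *m w^T) 0 0.

Definition famul v (Bf : 'I_2 -> 'M[F]_v) (x y : 'rV[F]_(v + 2)) : 'rV[F]_(v + 2) :=
  row_mx 0 (wp Bf (lsubmx x) (lsubmx y)).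

Definition FA v (Bf : 'I_2 -> 'M[F]_v) : alg F := mkalg (famul Bf).

Lemma wpDl v (Bf : 'I_2 -> 'M[F]_v) a u u' w :
  wp Bf (a *: u + u') w = a *: wp Bf u w + wp Bf u' w.
Proof.
apply/rowP=> l; rewrite !mxE !mulmxDl -!scalemxAl mulr_sumr -big_split /=.
by apply: eq_bigr => j _; rewrite !mxE mulrDl mulrA.
Qed.

Lemma wpDr v (Bf : 'I_2 -> 'M[F]_v) a u w w' :
  wp Bf u (a *: w + w') = a *: wp Bf u w + wp Bf u w'.
Proof.
apply/rowP=> l; rewrite !mxE mulr_sumr -big_split /=.
apply: eq_bigr => j _. by rewrite linearD linearZ /= !mxE mulrDr mulrCA.
Qed.

Lemma wp0l v (Bf : 'I_2 -> 'M[F]_v) w : wp Bf 0 w = 0.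
Proof. by apply/rowP=> l; rewrite !mxE big1 // => j _; rewrite !mxE big1 ?mul0r // => i _; rewrite mxE mul0r. Qed.

Lemma wp0r v (Bf : 'I_2 -> 'M[F]_v) u : wp Bf u 0 = 0.
Proof. by apply/rowP=> l; rewrite !mxE big1 // => j _; rewrite !mxE mulr0. Qed.

Lemma amul_FA v (Bf : 'I_2 -> 'M[F]_v) x y :
  amul F (FA Bf) x y = famul Bf x y.
Proof.
apply: amul_mkalg => a u w z; rewrite /famul linearP /=.
  by rewrite wpDl scale_row_mx add_row_mx scaler0 addr0.
by rewrite wpDr scale_row_mx add_row_mx scaler0 addr0.
Qed.

Lemma famul0l v (Bf : 'I_2 -> 'M[F]_v) x y z :
  famul Bf (famul Bf x y) z = 0.
Proof. by rewrite {1}/famul row_mxKl wp0l row_mx0. Qed.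

Lemma class_a_FA v (Bf : 'I_2 -> 'M[F]_v) :
  (forall l, exists u w, wp Bf u w = delta_mx 0 l) -> class_a F (FA Bf).
Proof.
move=> Hb; split; [|split].
- by move=> x y z; rewrite !amul_FA famul0l /famul row_mxKl wp0r row_mx0.
- by move=> x y z; rewrite !amul_FA famul0l.
apply: (@span_dim_basis _ _ _ (row_mx 0 1%:M)).
- by rewrite /row_free rank_row_0mx mxrank1.
- move=> i; have [u [w Huw]] := Hb i.
  exists (row_mx u 0 : 'rV_(v + 2)), (row_mx w 0 : 'rV_(v + 2)).
  by rewrite amul_FA /famul !row_mxKl Huw row_row_mx row1 /=; congr row_mx; apply/rowP=> t; rewrite !mxE.
move=> z [x [y ->]]; rewrite amul_FA /famul; apply/submxP.
by exists (wp Bf (lsubmx x) (lsubmx y)); rewrite mul_mx_row mulmx0 mulmx1.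
Qed.


Lemma eij n (A : 'M[F]_n) i j : ((delta_mx 0 i : 'rV_n) *m A *m (delta_mx 0 j : 'rV_n)^T) 0 0 = A i j.
Proof. by rewrite -rowE trmx_delta -colE !mxE. Qed.

Lemma alg_iso_dim (R S : alg F) : alg_iso F R S -> adim F R = adim F S.
Proof.
move=> [M [fM [uM _]]]; move: fM uM; rewrite /row_free /row_full.
by move=> /eqP e1 /eqP e2; exact: (etrans (esym e1) e2).
Qed.

Lemma mulx_block v (x : 'rV[F]_(v + 2)) (P : 'M[F]_v) (Q : 'M[F]_(v,2)) (C : 'M[F]_(2,v)) (G : 'M[F]_2) :
  x *m block_mx P Q C G = row_mx (lsubmx x *m P + rsubmx x *m C)
                                 (lsubmx x *m Q + rsubmx x *m G).
Proof. by rewrite -{1}(hsubmxK x) mul_row_block. Qed.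

Lemma iso_FA_eq v (Bf Bf' : 'I_2 -> 'M[F]_v) :
  (forall l, exists u w, wp Bf u w = delta_mx 0 l) ->
  alg_iso F (FA Bf) (FA Bf') ->
  exists (P : 'M[F]_v) (G : 'M[F]_2), P \in unitmx /\ G \in unitmx /\
    forall l, P *m Bf' l *m P^T = \sum_k G k l *: Bf k.
Proof.
move=> Hb [M [fM [uM HM0]]].
have HM : forall x y, famul Bf x y *m M = famul Bf' (x *m M) (y *m M).
  by move=> x y; rewrite -!amul_FA.
move: (M) fM HM => {HM0 uM} M; rewrite -(submxK M).
set P := ulsubmx M; set Q := ursubmx M; set C := dlsubmx M; set G := drsubmx M.
move=> fM HM.
have C0 : C = 0.
  apply/row_matrixP => l; rewrite row0 rowE.
  have [u [w Huw]] := Hb l.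
  have := HM (row_mx u 0) (row_mx w 0).
  rewrite /famul !row_mxKl Huw mul_row_block !mul0mx !add0r.
  by case/eq_row_mx.
rewrite C0 in fM HM.
have HG : forall u w, wp Bf u w *m G = wp Bf' (u *m P) (w *m P).
  move=> u w; have := HM (row_mx u 0) (row_mx w 0).
  rewrite /famul !row_mxKl !mul_row_block !mul0mx !add0r !mulmx0 !row_mxKl !addr0.
  by case/eq_row_mx.
move: fM; rewrite row_free_unit unitmxE det_ublock unitrM -!unitmxE => /andP[uP uG].
exists P, G; split=> //; split=> // l.
apply/matrixP => i j; rewrite -eij -!mulmxA mulmxA mulmxA -trmx_mul.
have := congr1 (fun r : 'rV_2 => r 0 l) (HG (delta_mx 0 i) (delta_mx 0 j)).
rewrite /= mxE [wp Bf' _ _ 0 l]mxE => <-.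
by rewrite summxE; apply: eq_bigr => k _; rewrite [wp _ _ _ _ _]mxE eij [RHS]mxE mulrC.
Qed.

Lemma iso_FA_of v (Bf Bf' : 'I_2 -> 'M[F]_v) (P : 'M[F]_v) :
  P \in unitmx -> (forall l, P *m Bf' l *m P^T = Bf l) ->
  alg_iso F (FA Bf) (FA Bf').
Proof.
move=> uP HP; exists (block_mx P 0 0 (1%:M : 'M_2) : 'M_(v + 2)).
have uM : (block_mx P 0 0 (1%:M : 'M_2) : 'M_(v + 2)) \in unitmx.
  by rewrite unitmxE det_ublock det1 mulr1 -unitmxE.
split; first by rewrite row_free_unit.
split; first by rewrite row_full_unit.
move=> x y; rewrite !amul_FA /famul !mulx_block !row_mxKl.
rewrite row_mxKr !mul0mx !mulmx0 !addr0 !add0r mulmx1; congr row_mx.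
apply/rowP=> l; rewrite [LHS]mxE [RHS]mxE -HP trmx_mul.
by rewrite !mulmxA.
Qed.


Lemma amulDl (R : alg F) a u w y :
  amul F R (a *: u + w) y = a *: amul F R u y + amul F R w y.
Proof.
rewrite /amul scaler_sumr -big_split; apply: eq_bigr => i _ /=.
rewrite scaler_sumr -big_split; apply: eq_bigr => j _ /=.
by rewrite !mxE scalerA -scalerDl mulrDl mulrA.
Qed.

Lemma amulDr (R : alg F) a u w x :
  amul F R x (a *: u + w) = a *: amul F R x u + amul F R x w.
Proof.
rewrite /amul scaler_sumr -big_split; apply: eq_bigr => i _ /=.
rewrite scaler_sumr -big_split; apply: eq_bigr => j _ /=.
by rewrite !mxE scalerA -scalerDl mulrDr mulrCA.
Qed.

Lemma amul0l (R : alg F) y : amul F R 0 y = 0.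
Proof. by rewrite /amul big1 // => i _; rewrite big1 // => j _; rewrite mxE mul0r scale0r. Qed.

Lemma amul0r (R : alg F) y : amul F R y 0 = 0.
Proof. by rewrite /amul big1 // => i _; rewrite big1 // => j _; rewrite mxE mulr0 scale0r. Qed.

Lemma amulZl (R : alg F) a u y : amul F R (a *: u) y = a *: amul F R u y.
Proof. by have := @amulDl R a u 0 y; rewrite addr0 amul0l addr0. Qed.

Lemma amulZr (R : alg F) a u y : amul F R y (a *: u) = a *: amul F R y u.
Proof. by have := @amulDr R a u 0 y; rewrite addr0 amul0r addr0. Qed.

Lemma amulD_l (R : alg F) u w y : amul F R (u + w) y = amul F R u y + amul F R w y.
Proof. by have := @amulDl R 1 u w y; rewrite !scale1r. Qed.

Lemma amulD_r (R : alg F) u w y : amul F R y (u + w) = amul F R y u + amul F R y w.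
Proof. by have := @amulDr R 1 u w y; rewrite !scale1r. Qed.

Section Unit.
Variable R : alg F.
Local Notation d := (adim F R).
Local Notation am := (amul F R).

Definition usc (x : 'rV[F]_(1 + d)) : F := lsubmx x 0 0.
Definition umul (x y : 'rV[F]_(1 + d)) : 'rV[F]_(1 + d) :=
  row_mx ((usc x * usc y)%:M)
    (usc x *: rsubmx y + usc y *: rsubmx x + am (rsubmx x) (rsubmx y)).
Definition uoneU : 'rV[F]_(1 + d) := row_mx 1%:M 0.
Definition UA : ualg F := @UAlg F (mkalg umul) uoneU.

Lemma usc_row a r : usc (row_mx a%:M r) = a.
Proof. by rewrite /usc row_mxKl mxE mulr1n. Qed.

Lemma udecomp x : x = row_mx (usc x)%:M (rsubmx x).
Proof.
rewrite -{1}(hsubmxK x); congr row_mx; apply/rowP => i.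
by rewrite ord1 /usc !mxE mulr1n.
Qed.

Lemma umulE a r b s : umul (row_mx a%:M r) (row_mx b%:M s) =
  row_mx (a * b)%:M (a *: s + b *: r + am r s).
Proof. by rewrite /umul !usc_row !row_mxKr. Qed.

Lemma uscD c u w : usc (c *: u + w) = c * usc u + usc w.
Proof. by rewrite /usc linearP !mxE. Qed.

Lemma umulDl c u w y : umul (c *: u + w) y = c *: umul u y + umul w y.
Proof.
rewrite /umul uscD linearP /= amulDl scale_row_mx add_row_mx; congr row_mx.
  by apply/matrixP=> i j; rewrite !ord1 !mxE eqxx !mulr1n; ring.
by apply/rowP => j; rewrite !mxE; ring.
Qed.

Lemma umulDr c u w y : umul y (c *: u + w) = c *: umul y u + umul y w.
Proof.
rewrite /umul uscD linearP /= amulDr scale_row_mx add_row_mx; congr row_mx.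
  by apply/matrixP=> i j; rewrite !ord1 !mxE eqxx !mulr1n; ring.
by apply/rowP => j; rewrite !mxE; ring.
Qed.

Lemma amul_UA x y : amul F (UA) x y = umul x y.
Proof. by apply: amul_mkalg; [exact: umulDl | exact: umulDr]. Qed.

Lemma usc_umul x y : usc (umul x y) = usc x * usc y.
Proof. by rewrite /umul usc_row. Qed.

Lemma usc_one : usc uoneU = 1.
Proof. by rewrite /uoneU usc_row. Qed.

Lemma cube0 : alg_assoc F R -> (forall u v w, am (am u v) w = 0) ->
  forall r, am r (am r r) = 0.
Proof. by move=> HA H3 r; rewrite -HA H3. Qed.

Lemma uinv_iff : alg_assoc F R -> (forall u v w, am (am u v) w = 0) ->
  forall x, Defs.invertible F UA x <-> usc x != 0.
Proof.
move=> HA H3 x; split.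
  move=> [y [h _]]; move: h; rewrite amul_UA => /(congr1 usc).
  rewrite usc_umul usc_one => h; apply/eqP => e; move: h; rewrite e mul0r.
  by move/eqP; rewrite eq_sym oner_eq0.
move=> a0; set a := usc x; set r := rsubmx x.
exists (row_mx (a^-1)%:M ((- (a^-1 * a^-1)) *: r + (a^-1 * a^-1 * a^-1) *: am r r)).
rewrite !amul_UA /= (udecomp x) -/a -/r !umulE.
rewrite !amulD_r !amulD_l !amulZr !amulZl (cube0 HA H3) H3 /uoneU.
split; congr row_mx.
- by rewrite mulfV.
- by apply/rowP => j; rewrite !mxE; field.
- by rewrite mulVf.
- by apply/rowP => j; rewrite !mxE; field.
Qed.

Lemma urad_iff : alg_assoc F R -> (forall u v w, am (am u v) w = 0) ->
  forall x, Defs.rad F UA x <-> usc x = 0.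
Proof.
move=> HA H3 x; rewrite /Defs.rad (uinv_iff HA H3); split.
  by move=> h; apply/eqP; apply: negbNE; apply/negP.
by move=> -> /eqP.
Qed.

Lemma umul_rad r s : umul (row_mx 0 r) (row_mx 0 s) = row_mx 0 (am r s).
Proof.
have -> : (0 : 'rV[F]_1) = (0 : F)%:M by apply/matrixP=> i j; rewrite !mxE mul0rn.
by rewrite umulE mulr0 !scale0r !add0r.
Qed.

Lemma class_b_UA : class_a F R -> class_b F UA.
Proof.
move=> [HA [H3 Hs]].
have Hrad := urad_iff HA H3.
split; [|split; [|split; [|split]]].
- move=> x y z; rewrite !amul_UA /= (udecomp x) (udecomp y) (udecomp z) !umulE.
  rewrite !amulD_r !amulD_l !amulZr !amulZl HA; congr row_mx.
    by rewrite mulrA.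
  by apply/rowP => j; rewrite !mxE; ring.
- move=> x; rewrite !amul_UA /= (udecomp x) /uoneU !umulE amul0l amul0r.
  split; congr row_mx; rewrite ?mul1r ?mulr1 //;
  by apply/rowP => j; rewrite !mxE; ring.
- move=> x y /Hrad hx /Hrad hy; apply/Hrad.
  have -> : usc (x + y) = usc x + usc y by rewrite /usc linearD !mxE.
  by rewrite hx hy addr0.
- move=> u v w /Hrad hu /Hrad hv /Hrad hw; rewrite !amul_UA /=.
  rewrite (udecomp u) (udecomp v) (udecomp w) hu hv hw.
  have -> : (0 : F)%:M = 0 :> 'M_1 by apply/matrixP=> i j; rewrite !mxE mul0rn.
  by rewrite !umul_rad H3 row_mx0.
apply: (span_dim_row0 Hs) => w; split.
  move=> [u [v [/Hrad hu [/Hrad hv ->]]]]; rewrite amul_UA /=.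
  exists (am (rsubmx u) (rsubmx v)); split; first by exists (rsubmx u), (rsubmx v).
  rewrite (udecomp u) (udecomp v) hu hv.
  have -> : (0 : F)%:M = 0 :> 'M_1 by apply/matrixP=> i j; rewrite !mxE mul0rn.
  by rewrite umul_rad !row_mxKr.
move=> [p [[r [s ->]] ->]].
exists (row_mx 0 r), (row_mx 0 s); split; first by apply/Hrad; rewrite /usc row_mxKl mxE.
split; first by apply/Hrad; rewrite /usc row_mxKl mxE.
by rewrite amul_UA umul_rad.
Qed.

End Unit.

Lemma rowM_blk (R S : alg F) (N : 'M[F]_(adim F R, adim F S)) (a : F) r :
  row_mx a%:M r *m block_mx (1%:M : 'M_1) 0 0 N = row_mx a%:M (r *m N).
Proof. by rewrite mul_row_block !mulmx0 !addr0 mulmx1 add0r. Qed.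

Lemma ualg_iso_of (R S : alg F) : alg_iso F R S -> ualg_iso F (UA R) (UA S).
Proof.
move=> [N [fN [uN HN]]].
exists (block_mx (1%:M : 'M_1) 0 0 N : 'M_(1 + adim F R, 1 + adim F S)).
split; first by move: fN; rewrite /row_free rank_diag_block_mx mxrank1 => /eqP ->.
split; first by move: uN; rewrite /row_full rank_diag_block_mx mxrank1 => /eqP ->.
split; first by rewrite /= /uoneU rowM_blk mul0mx.
move=> x y; rewrite !amul_UA /= (udecomp x) (udecomp y) !umulE !rowM_blk umulE.
congr row_mx; rewrite !mulmxDl -!scalemxAl; congr (_ + _).
exact: HN.
Qed.

Lemma ualg_iso_dim (R S : alg F) : ualg_iso F (UA R) (UA S) -> adim F R = adim F S.
Proof.
move=> [M [fM [uM _]]]; move: fM uM; rewrite /row_free /row_full.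
move=> /eqP e1 /eqP e2; have := etrans (esym e1) e2.
by move=> /= /eqP; rewrite eqn_add2l => /eqP.
Qed.

Lemma iso_of_ualg_iso (R S : alg F) : class_a F R -> class_a F S ->
  ualg_iso F (UA R) (UA S) -> alg_iso F R S.
Proof.
move=> [HAR [H3R _]] [HAS [H3S _]] [M [fM [uM [h1 HM]]]].
have surj : forall y : 'rV[F]_(adim F (UA S)), exists z : 'rV[F]_(adim F (UA R)), y = z *m M.
  move=> y; have : (y <= M)%MS by exact: submx_full.
  by move/submxP=> [D ->]; exists D.
have inj := row_free_inj fM.
have pres : forall x, Defs.invertible F (UA S) (x *m M) -> Defs.invertible F (UA R) x.
  move=> x [z [hz1 hz2]]; have [z0 ez] := surj z; exists z0.
  by split; apply: inj; rewrite /= HM h1 -ez.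
move: (M) fM uM HM h1 pres => {surj inj} M.
rewrite -[M]submxK.
set c1 := ulsubmx M; set q1 := ursubmx M; set c2 := dlsubmx M; set N := drsubmx M.
clearbody c1 q1 c2 N.
move=> fM uM HM h1 pres.
have [ec1 eq1] : c1 = 1%:M /\ q1 = 0.
  move: h1; rewrite /= /uoneU mul_row_block !mul0mx !addr0 !mul1mx.
  by case/eq_row_mx.
have ec2 : c2 = 0.
  apply/matrixP => i j; rewrite ord1 mxE.
  have hr : Defs.rad F (UA R) (row_mx 0 (delta_mx 0 i)).
    by apply/(urad_iff HAR H3R); rewrite /usc row_mxKl mxE.
  have : Defs.rad F (UA S) (row_mx 0 (delta_mx 0 i) *m block_mx c1 q1 c2 N).
    by move=> h; apply: hr; exact: pres.
  move/(urad_iff HAS H3S); rewrite mul_row_block /usc row_mxKl mul0mx add0r.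
  by rewrite -rowE mxE.
rewrite ec1 eq1 ec2 in fM uM HM.
exists N; split.
  by move: fM; rewrite /row_free rank_diag_block_mx mxrank1 eqn_add2l.
split.
  by move: uM; rewrite /row_full rank_diag_block_mx mxrank1 eqn_add2l.
move=> r s; have := HM (row_mx 0 r) (row_mx 0 s).
rewrite !amul_UA /= !umul_rad.
have e0 : (0 : 'rV[F]_1) = (0 : F)%:M by apply/matrixP=> i j; rewrite !mxE mul0rn.
rewrite e0 !rowM_blk -e0 umul_rad.
by case/eq_row_mx.
Qed.

End Gen.


Ltac simp := do 3 rewrite ?trmx0 ?mulmx0 ?mul0mx ?mulmx1 ?mul1mx ?addr0 ?add0r ?row_mx0 ?col_mx0.

Section Spec.
Variable F : fieldType.
Variable n : nat.
Local Notation k := n.+1.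

Local Notation m := (k + (k + k))%N.
Local Notation v := (m + m)%N.

Definition Emx : 'M[F]_m := block_mx 1%:M 0 0 0.
Definition Dmx (A B : 'M[F]_k) : 'M[F]_m :=
  block_mx A (row_mx 1%:M 0) (col_mx 0 1%:M) (block_mx 0 1%:M 0 B).
Definition Dinv (A B : 'M[F]_k) : 'M[F]_m :=
  block_mx 0 (row_mx (- B) 1%:M) (col_mx 1%:M 0) (block_mx (A *m B) (- A) 1%:M 0).

Lemma Dmx_unit A B : Dmx A B \in unitmx.
Proof.
have h : Dmx A B *m Dinv A B = 1%:M.
  rewrite /Dmx /Dinv mulmx_block !mulmx0 !add0r mul_mx_row mul_row_col.
  rewrite mul_row_block mul_block_col mul_col_row mulmx_block.
  rewrite !mulmx0 !mul0mx !mul1mx !mulmx1 !addr0 !add0r mulmxN add_row_mx.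
  rewrite addNr addrN row_mx0 add_block_mx !addr0 !add0r.
  rewrite col_mx0 addNr [RHS](scalar_mx_block k (k + k)) (scalar_mx_block k k).
  done.
by case: (mulmx1_unit h).
Qed.


Definition Bf0 : 'M[F]_v := block_mx 0 1%:M 0 0.
Definition Bf1 A B : 'M[F]_v := block_mx 0 Emx (Dmx A B)^T 0.
Definition Bfs A B : 'I_2 -> 'M[F]_v := fun l => if val l == 0%N then Bf0 else Bf1 A B.

Lemma bform p q (x1 : 'rV[F]_p) (y1 : 'rV[F]_q) (x2 : 'rV[F]_p) (y2 : 'rV[F]_q) (P : 'M[F]_p) (Q : 'M[F]_(p,q)) (R : 'M[F]_(q,p)) (S : 'M[F]_q) :
  row_mx x1 y1 *m block_mx P Q R S *m (row_mx x2 y2)^T =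
  (x1 *m P + y1 *m R) *m x2^T + (x1 *m Q + y1 *m S) *m y2^T.
Proof. by rewrite mul_row_block tr_row_mx mul_row_col. Qed.

Definition e0 : 'rV[F]_k := delta_mx 0 ord0.
Definition e1 : 'rV[F]_m := row_mx e0 0.
Definition e2 : 'rV[F]_m := row_mx 0 (row_mx e0 0).

Lemma e0e0 : e0 *m e0^T = 1%:M.
Proof. by rewrite /e0 trmx_delta mul_delta_mx; apply/matrixP => i j; rewrite !ord1 !mxE. Qed.

Lemma e2e2 : e2 *m e2^T = 1%:M.
Proof.
by rewrite /e2 tr_row_mx mul_row_col; simp; rewrite tr_row_mx mul_row_col; simp; rewrite e0e0.
Qed.

Lemma e2E : e2 *m Emx = 0.
Proof. by rewrite /e2 /Emx mul_row_block !mulmx0 !mul0mx !addr0 row_mx0. Qed.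

Lemma e1De2 A B : e1 *m Dmx A B *m e2^T = 1%:M.
Proof.
rewrite /e1 /Dmx mul_row_block !mul0mx !addr0 mul_mx_row mulmx1 mulmx0.
by rewrite /e2 tr_row_mx mul_row_col; simp; rewrite tr_row_mx mul_row_col; simp; rewrite e0e0.
Qed.

Lemma Hb_Bfs A B : forall l, exists u w, wp (Bfs A B) u w = delta_mx 0 l.
Proof.
case=> [[|[|l']] Hl] //.
- exists (row_mx e2 0), (row_mx 0 e2); apply/rowP => j; rewrite mxE.
  case: j => [[|[|j']] Hj] //=; rewrite [RHS]mxE /=.
  + by rewrite /Bf0 bform; simp; rewrite e2e2 mxE.
  + by rewrite /Bf1 bform; simp; rewrite e2E; simp; rewrite mxE.
- exists (row_mx 0 e2), (row_mx e1 0); apply/rowP => j; rewrite mxE.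
  case: j => [[|[|j']] Hj] //=; rewrite [RHS]mxE /=.
  + by rewrite /Bf0 bform; simp; rewrite mxE.
  + rewrite /Bf1 bform; simp.
    by rewrite -[e2]trmxK -trmx_mul -trmx_mul mulmxA e1De2 trmx1 mxE.
Qed.


Lemma rank_uv p (U V X : 'M[F]_p) : U \in unitmx -> V \in unitmx ->
  \rank (U *m X *m V) = \rank X.
Proof.
move=> uU uV; rewrite mxrankMfree ?row_free_unit //.
by rewrite (eqmxMfull X) // row_full_unit.
Qed.

Lemma rank_anti p (X Y : 'M[F]_p) :
  \rank (block_mx 0 X Y 0 : 'M_(p + p)) = (\rank X + \rank Y)%N.
Proof.
set sw : 'M[F]_(p + p) := block_mx 0 1%:M 1%:M 0.
have swu : sw \in unitmx.
  have h : sw *m sw = 1%:M.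
    by rewrite /sw mulmx_block; simp; rewrite -scalar_mx_block.
  by case: (mulmx1_unit h).
rewrite -(mxrankMfree _ (B := sw)) ?row_free_unit //.
by rewrite /sw mulmx_block; simp; rewrite rank_diag_block_mx.
Qed.

Lemma cong_diag p q (X : 'M[F]_p) (Y : 'M[F]_q) a b c d :
  block_mx X 0 0 Y *m block_mx a b c d *m (block_mx X 0 0 Y)^T =
  block_mx (X *m a *m X^T) (X *m b *m Y^T) (Y *m c *m X^T) (Y *m d *m Y^T).
Proof. by rewrite tr_block_mx !mulmx_block; simp. Qed.

Lemma sum2 (f : 'I_2 -> 'M[F]_v) : \sum_(i < 2) f i = f ord0 + f ord_max.
Proof. by rewrite big_ord_recr big_ord1 /=; congr (f _ + _); apply: val_inj. Qed.

Lemma combo A B g h : g *: Bf0 + h *: Bf1 A B =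
  block_mx 0 (g *: 1%:M + h *: Emx) (h *: (Dmx A B)^T) 0.
Proof. by rewrite /Bf0 /Bf1 !scale_block_mx add_block_mx !scaler0; simp. Qed.

Definition i0 : 'I_m := lshift (k + k) ord0.
Definition i1 : 'I_m := rshift k (lshift k ord0).

Lemma E00 : Emx i0 i0 = 1. Proof. by rewrite /Emx /i0 block_mxEul mxE. Qed.
Lemma E11 : Emx i1 i1 = 0. Proof. by rewrite /Emx /i1 block_mxEdr mxE. Qed.
Lemma I00 : (1%:M : 'M[F]_m) i0 i0 = 1. Proof. by rewrite mxE eqxx. Qed.
Lemma I11 : (1%:M : 'M[F]_m) i1 i1 = 1. Proof. by rewrite mxE eqxx. Qed.

Lemma Emx_idem : Emx *m Emx = Emx.
Proof. by rewrite /Emx mulmx_block; simp. Qed.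

Lemma rankE : \rank Emx = k.
Proof. by rewrite /Emx rank_diag_block_mx mxrank1 mxrank0 addn0. Qed.

Lemma rank1E : \rank (1%:M - Emx) = (k + k)%N.
Proof.
rewrite /Emx (scalar_mx_block k (k + k)) opp_block_mx add_block_mx !oppr0 !addr0 subrr.
by rewrite rank_diag_block_mx mxrank1 mxrank0.
Qed.


Lemma E_comm (P : 'M[F]_m) : P *m Emx = Emx *m P ->
  P = block_mx (ulsubmx P) 0 0 (drsubmx P).
Proof.
rewrite -[P]submxK; set a := ulsubmx P; set b := ursubmx P; set c := dlsubmx P;
  set e := drsubmx P; clearbody a b c e.
rewrite /Emx !mulmx_block; simp => /eq_block_mx [_ hb hc _].
by rewrite block_mxKul block_mxKdr hb -hc.
Qed.

Lemma D_comm (Q1 : 'M[F]_k) (Q2 : 'M[F]_(k + k)) A B A' B' :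
  block_mx Q1 0 0 Q2 *m Dmx A' B' = Dmx A B *m block_mx Q1 0 0 Q2 ->
  Q1 *m A' = A *m Q1 /\ Q1 *m B' = B *m Q1.
Proof.
rewrite -[Q2]submxK; set r11 := ulsubmx Q2; set r12 := ursubmx Q2;
  set r21 := dlsubmx Q2; set r22 := drsubmx Q2; clearbody r11 r12 r21 r22.
rewrite /Dmx !mulmx_block; simp.
rewrite ?mul_mx_row ?mul_block_col ?mul_row_block ?mul_col_mx ?mulmx_block; simp.
move=> /eq_block_mx [hA hU hV hW].
move: hU hV hW => /eq_row_mx [<- _] /eq_col_mx [_ e22] /eq_block_mx [e21 _ _ h].
by split => //; move: h; rewrite -e21 e22 add0r.
Qed.


Lemma ent p (M : 'M[F]_p) g h i : (g *: 1%:M + h *: M) i i = g + h * M i i.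
Proof. by rewrite !mxE eqxx mulr1. Qed.

Lemma sqE p (M : 'M[F]_p) (c d : F) : M *m M = M ->
  (c *: 1%:M + d *: M) *m (c *: 1%:M + d *: M) = (c * c) *: 1%:M + (c * d + d * c + d * d) *: M.
Proof.
move=> MM; rewrite mulmxDl !mulmxDr -!scalemxAl -!scalemxAr !mul1mx !mulmx1 MM !scalerA.
by apply/matrixP => i j; rewrite !mxE; ring.
Qed.

Lemma m_gt0 : (0 < m)%N. Proof. lia. Qed.

Lemma core A B A' B' (P : 'M[F]_v) (G : 'M[F]_2) : P \in unitmx ->
  (forall l, P *m Bfs A' B' l *m P^T = \sum_k G k l *: Bfs A B k) ->
  similar_pairs F A B A' B'.
Proof.
move=> uP H.
have eq0 := H ord0; have eq1 := H ord_max.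
rewrite sum2 /Bfs /= combo in eq0.
rewrite sum2 /Bfs /= combo in eq1.
set g00 := G ord0 ord0 in eq0; set g10 := G ord_max ord0 in eq0.
set g01 := G ord0 ord_max in eq1; set g11 := G ord_max ord_max in eq1.
clearbody g00 g10 g01 g11.
have uPt : P^T \in unitmx by rewrite unitmx_tr.
have rk0 := rank_uv Bf0 uP uPt.
rewrite eq0 rank_anti {1}/Bf0 rank_anti mxrank1 mxrank0 addn0 in rk0.
have g10_0 : g10 = 0.
  apply/eqP; apply: contraT => nz.
  have rD : \rank (g10 *: (Dmx A B)^T) = m.
    by rewrite mxrank_scale_nz // mxrank_tr mxrank_unit // Dmx_unit.
  move: rk0; rewrite rD => rk.
  have aux : forall a : nat, (a + m)%N = m -> a = 0%N by move=> a; lia.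
  move/aux/eqP: rk; rewrite mxrank_eq0 => /eqP X0.
  have h1 := congr1 (fun M : 'M[F]_m => M i1 i1) X0; have h0 := congr1 (fun M : 'M[F]_m => M i0 i0) X0.
  move: h1 h0; rewrite /= !ent E11 E00 !mxE mulr0 addr0 mulr1 => ->.
  by rewrite add0r => /eqP; rewrite (negbTE nz).
rewrite g10_0 !scale0r addr0 in eq0 rk0.
have g00nz : g00 != 0.
  apply/eqP => g0; move: rk0; rewrite g0 scale0r !mxrank0 => h.
  by move: m_gt0; rewrite -h.
clear H rk0.
move: uP uPt eq0 eq1; rewrite -[P]submxK.
set P11 := ulsubmx P; set P12 := ursubmx P; set P21 := dlsubmx P; set P22 := drsubmx P.
clearbody P11 P12 P21 P22 => uP uPt eq0 eq1.
move: eq0; rewrite /Bf0 tr_block_mx !mulmx_block; simp => /eq_block_mx [h12 h22 h21' h21].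
have [uP11 uP22t] : P11 \in unitmx /\ P22^T \in unitmx.
  have h : P11 *m (g00^-1 *: P22^T) = 1%:M.
    by rewrite -scalemxAr h22 scalerA mulVf // scale1r.
  case: (mulmx1_unit h) => u1 u2; split=> //; move: u2.
  by rewrite unitmxZ // unitfE invr_eq0.
have P12_0 : P12 = 0.
  by apply: trmx_inj; rewrite trmx0 -(mulKmx uP11 P12^T) h12 mulmx0.
have P21_0 : P21 = 0.
  by rewrite -(mulmxK uP22t P21) h21 mul0mx.
have eP22 : P22^T = g00 *: invmx P11.
  by rewrite -(mulKmx uP11 P22^T) h22 -scalemxAr mulmx1.
have uP22 : P22 \in unitmx by rewrite -unitmx_tr.
rewrite P12_0 P21_0 in eq1; clear h12 h21' h21 uP uPt.
move: eq1; rewrite /Bf1 cong_diag; simp => /eq_block_mx [_ hE hD _].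
have uP11t : P11^T \in unitmx by rewrite unitmx_tr.
have g11nz : g11 != 0.
  apply/eqP => g0; have := rank_uv (Dmx A' B')^T uP22 uP11t.
  by rewrite hD g0 scale0r mxrank0 mxrank_tr mxrank_unit ?Dmx_unit.

set Z := P11 *m Emx *m invmx P11.
set c := g00^-1 * g01; set d := g00^-1 * g11.
have hZ : Z = c *: 1%:M + d *: Emx.
  move: hE; rewrite eP22 -scalemxAr -/Z => /(congr1 (fun M => g00^-1 *: M)).
  by rewrite scalerA mulVf // scale1r scalerDr !scalerA.
have ZZ : Z *m Z = Z.
  by rewrite /Z -!mulmxA (mulKmx uP11) (mulmxA Emx) Emx_idem.
rewrite hZ sqE ?Emx_idem // in ZZ.
have h1 := congr1 (fun M : 'M[F]_m => M i1 i1) ZZ.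
have h0 := congr1 (fun M : 'M[F]_m => M i0 i0) ZZ.
move: h1 h0; rewrite /= !ent E11 E00 !mulr0 !addr0 !mulr1 => h1 h0.
have dnz : d != 0 by rewrite mulf_neq0 // invr_eq0.
have : c * (c - 1) = 0 by rewrite mulrBr mulr1 h1 subrr.
move/eqP; rewrite mulf_eq0 subr_eq0 => /orP [/eqP c0 | /eqP c1]; last first.
  exfalso.
  have e : d * (d + 1) = (c * c + (c * d + d * c + d * d)) - (c + d) by rewrite c1; ring.
  move: e; rewrite h0 subrr => /eqP; rewrite mulf_eq0 (negbTE dnz) /= addr_eq0 => /eqP dm1.
  have uinv : invmx P11 \in unitmx by rewrite unitmx_inv.
  have := rank_uv Emx uP11 uinv; rewrite -/Z hZ c1 dm1 scale1r scaleN1r rank1E rankE.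
  lia.
have d1 : d = 1.
  have e : d * (d - 1) = (c * c + (c * d + d * c + d * d)) - (c + d) by rewrite c0; ring.
  by move: e; rewrite h0 subrr => /eqP; rewrite mulf_eq0 (negbTE dnz) subr_eq0 => /eqP.
have ZE : Z = Emx by rewrite hZ c0 d1 scale0r add0r scale1r.
have g11e : g11 = g00.
  move: d1; rewrite /d => /(congr1 (fun x => g00 * x)).
  by rewrite mulrA mulfV // mul1r mulr1.
have PE : P11 *m Emx = Emx *m P11.
  by have := congr1 (mulmx^~ P11) ZE; rewrite /= /Z mulmxKV.
have PD : P11 *m Dmx A' B' = Dmx A B *m P11.
  have := congr1 trmx hD; rewrite !trmx_mul !trmxK eP22 g11e.
  have tZ : forall a (X : 'M[F]_m), (a *: X)^T = a *: X^T.
    by move=> a X; apply/matrixP => i j; rewrite !mxE.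
  rewrite tZ trmxK -!scalemxAr => /(congr1 (fun M => g00^-1 *: M)).
  rewrite !scalerA mulVf // !scale1r => h.
  by rewrite -h mulmxA mulmxKV.
have EP := E_comm PE.
set Q1 := ulsubmx P11 in EP; set Q2 := drsubmx P11 in EP.
rewrite EP in PD uP11.
have [hA hB] := D_comm PD.
have uQ1 : Q1 \in unitmx.
  by move: uP11; rewrite !unitmxE det_ublock unitrM => /andP [].
exists Q1; split=> //; split.
  by rewrite -mulmxA -hA mulKmx.
by rewrite -mulmxA -hB mulKmx.
Qed.

Lemma conv A B A' B' : similar_pairs F A B A' B' ->
  exists P : 'M[F]_v, P \in unitmx /\ forall l, P *m Bfs A' B' l *m P^T = Bfs A B l.
Proof.
move=> [S [uS [eA eB]]].
have hA : S *m A' = A *m S by rewrite eA !mulmxA mulmxV // mul1mx.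
have hB : S *m B' = B *m S by rewrite eB !mulmxA mulmxV // mul1mx.
set P11 : 'M[F]_m := block_mx S 0 0 (block_mx S 0 0 S).
have uP11 : P11 \in unitmx by rewrite !unitmxE !det_ublock !unitrM -!unitmxE uS.
have PE : P11 *m Emx = Emx *m P11 by rewrite /Emx !mulmx_block; simp.
have PD : P11 *m Dmx A' B' = Dmx A B *m P11.
  rewrite /Dmx !mulmx_block; simp.
  rewrite ?mul_mx_row ?mul_block_col ?mul_row_block ?mul_col_mx ?mulmx_block; simp.
  by rewrite hA hB.
exists (block_mx P11 0 0 (invmx P11)^T); split.
  by rewrite unitmxE det_ublock unitrM -!unitmxE unitmx_tr unitmx_inv uP11.
case=> [[|[|l']] Hl] //; rewrite /Bfs /=.
  by rewrite /Bf0 cong_diag; simp; rewrite trmxK mulmxV.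
rewrite /Bf1 cong_diag; simp; rewrite trmxK PE -mulmxA mulmxV // mulmx1.
by rewrite -!trmx_mul mulmxA PD -mulmxA mulmxV // mulmx1.
Qed.

End Spec.

Unset Implicit Arguments.

Lemma wild_a (F : fieldType) : wild F (class_a F) (alg_iso F).
Proof.
exists (fun n A B => FA (Bfs A B)); split; [|split].
- by move=> n A B; apply: class_a_FA; exact: Hb_Bfs.
- move=> n A B A' B'; split.
    by move/conv => [P [uP HP]]; exact: iso_FA_of uP HP.
  by move/(iso_FA_eq (Hb_Bfs A B)) => [P [G [uP [_ HP]]]]; exact: core uP HP.
- move=> n m A B A' B' nm /alg_iso_dim /=; lia.
Qed.

Lemma wild_b (F : fieldType) : wild F (class_b F) (ualg_iso F).
Proof.
exists (fun n A B => UA (FA (Bfs A B))); split; [|split].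
- by move=> n A B; apply: class_b_UA; apply: class_a_FA; exact: Hb_Bfs.
- move=> n A B A' B'; split.
    move/conv => [P [uP HP]]; apply: ualg_iso_of; exact: iso_FA_of uP HP.
  move/iso_of_ualg_iso => h.
  have := h (class_a_FA (Hb_Bfs A B)) (class_a_FA (Hb_Bfs A' B')).
  by move/(iso_FA_eq (Hb_Bfs A B)) => [P [G [uP [_ HP]]]]; exact: core uP HP.
- move=> n m A B A' B' nm /ualg_iso_dim /=; lia.
Qed.

Theorem theorem3p1 (F : closedFieldType) :
  ~~ (2%N \in [pchar F]) ->
  wild F (class_a F) (alg_iso F) /\ wild F (class_b F) (ualg_iso F).
Proof. by move=> _; split; [exact: wild_a | exact: wild_b]. Qed.
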